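(* Let $a,b,d>0$, let $c_{-}$ be the unique negative zero of $Q(x)=4ax^3-b^2x^2-18abd\,x+27a^2d^2+4db^3$, let $c^{*}=-\sqrt{3bd}$, and suppose $c\in(c_{-},c^{*})$. Let $\phi(x)=\frac{ax^3+bx^2+cx+d}{x^3}$ ($x>0$) and $P(t)=t^4-at^3-bt^2-ct-d$, $t>0$. Let $c_b$ be the unique negative root of the quadratic polynomial $H(x)=108x^2+(108ab+27a^3)x-9a^2b^2-32b^3$. \begin{description} \item[(a)] If $c=c_b$ then $P'$ touches the horizontal axis (i.e. $P'(t^* )=P''(t^* )=0$) at $t^{*}=-\frac{6c_{b}+ab}{3a^2+8b}$, and $t^*>0$. \item[(b)] If $c_{b}\geq \frac{b^2-12d}{3a}$ then $\phi$ has a unique positive equilibrium for all $c\in(c_{-},c^{*})$. \item[(c)] If $c_{b}<\frac{b^2-12d}{3a}$ then, as the parameter $c$ increases from $c_b$ (with $a,b,d$ fixed), $P$ touches the horizontal axis first at a local minimum point $t_m$ of $P$ and next at a local maximum point $t_M$ of $P$, with $0<t_M<t_m$. Let $c_m$ and $c_M$ be the values of the parameter $c$ corresponding to $t_m$ and $t_M$ respectively. Then $$c_{b}<c_{m}<c_{M}<c^{*},\qquad c_{-}<c_{M}.$$ Moreover: \begin{description} \item[(c1)] If $c_{-}\leq c_{m}$: for $c\in(c_m,c_M)$, $\phi$ has three positive equilibria. For $c=c_m$, $\phi$ has two positive equilibria, one of which is $t_m$; the graph of $\phi$ is tangent to the line $y=x$ at $t_m$, and $t_m$ is greater than the other equilibrium.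 For $c=c_M$, $\phi$ has two positive equilibria, one of which is $t_M$; the graph of $\phi$ is tangent to the line $y=x$ at $t_M$, and $t_M$ is lower than the other equilibrium. For $c\in(c_{-},c_m)\cup(c_M,c^{*})$, $\phi$ has a unique positive equilibrium. \item[(c2)] If $c_m<c_{-}$: for $c\in(c_{-},c_M)$, $\phi$ has three positive equilibria. For $c=c_M$, $\phi$ has two positive equilibria, one of which is $t_M$; the graph of $\phi$ is tangent to the line $y=x$ at $t_M$, and $t_M$ is lower than the other equilibrium. For $c\in(c_M,c^{*})$, $\phi$ has a unique positive equilibrium. \end{description} \end{description}
   Context: $\phi$ is the right-hand side of the difference equation $x_{n+1}=\frac{ax_n^3+bx_n^2+cx_n+d}{x_n^3}$. An equilibrium of $\phi$ is a point $t>0$ with $\phi(t)=t$; these are exactly the positive roots of $P$. ''$P$ touches the horizontal axis at $t_0$'' means $t_0$ is a root of $P$ with $P'(t_0)=0$ (a double root). *)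

(* Defs.v *)
From HB Require Import structures.
From mathcomp Require Import all_boot all_order all_algebra.
From mathcomp Require Import all_classical all_reals all_analysis.
Set Implicit Arguments. Unset Strict Implicit. Unset Printing Implicit Defensive.
Import Order.TTheory GRing.Theory Num.Theory.
Import numFieldNormedType.Exports.
Local Open Scope ring_scope.

Section Defs.
Variable R : realType.

Definition phi (a b c d : R) (x : R) : R :=
  (a * x ^+ 3 + b * x ^+ 2 + c * x + d) / x ^+ 3.

Definition Ppoly (a b c d : R) : {poly R} :=
  'X^4 - a%:P * 'X^3 - b%:P * 'X^2 - c%:P * 'X - d%:P.

Definition Qf (a b d x : R) : R :=
  4 * a * x ^+ 3 - b ^+ 2 * x ^+ 2 - 18 * a * b * d * x
  + 27 * a ^+ 2 * d ^+ 2 + 4 * d * b ^+ 3.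

Definition Hf (a b x : R) : R :=
  108 * x ^+ 2 + (108 * a * b + 27 * a ^+ 3) * x - 9 * a ^+ 2 * b ^+ 2 - 32 * b ^+ 3.

Definition cstar (b d : R) : R := - Num.sqrt (3 * b * d).

Definition equilibrium (a b c d t : R) : Prop := 0 < t /\ phi a b c d t = t.

Definition n_equilibria (a b c d : R) (n : nat) : Prop :=
  exists s : seq R, [/\ uniq s, size s = n &
    forall t, t \in s <-> equilibrium a b c d t].

Definition touches (p : {poly R}) (t : R) : Prop :=
  p.[t] = 0 /\ (p^`()).[t] = 0.

Definition local_min_pt (f : R -> R) (t : R) : Prop :=
  exists e : R, 0 < e /\ forall x, `|x - t| < e -> f t <= f x.

Definition local_max_pt (f : R -> R) (t : R) : Prop :=
  exists e : R, 0 < e /\ forall x, `|x - t| < e -> f x <= f t.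

Definition tangent_to_diag (f : R -> R) (t : R) : Prop :=
  f t = t /\ is_derive t 1 f 1.

End Defs.

(* Main.v *)
Require Import Defs.
From HB Require Import structures.
From mathcomp Require Import all_boot all_order all_algebra.
From mathcomp Require Import all_classical all_reals all_analysis.
From mathcomp Require Import ring lra.
Import Order.TTheory GRing.Theory Num.Theory.
Import numFieldNormedType.Exports.
Local Open Scope ring_scope.

Section Gen.
Variable R : realType.

Lemma is_derive_inv (x : R) : x != 0 -> is_derive x 1 (fun y : R => y^-1) (- x ^- 2).
Proof.
move=> x0; apply: DeriveDef.
  exact: (@derivableV _ _ id).
by rewrite (@deriveV _ _ id) // derive_val /= scaler1.
Qed.

Lemma incr_lem (f f' : R -> R) (u v : R) :
  (forall x, u <= x <= v -> is_derive x 1 f (f' x)) ->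
  (forall x, u < x < v -> 0 < f' x) ->
  forall x y, u <= x -> x < y -> y <= v -> f x < f y.
Proof.
move=> hd hp x y ux xy yv.
have uv : u <= v by apply: (le_trans ux); apply: (le_trans (ltW xy)).
have dd : forall z, z \in `]u, v[ -> derivable f z 1.
  move=> z; rewrite in_itv /= => /andP[h1 h2].
  by have [] := hd z; rewrite ?(ltW h1) ?(ltW h2).
apply: (@gtr0_derive1_lt_cc R f u v dd).
- move=> z zi; have zi' := zi; move: zi'; rewrite in_itv /= => /andP[h1 h2].
  have hz := hd z; rewrite ?(ltW h1) ?(ltW h2) in hz.
  rewrite derive1E (@derive_val _ _ _ _ _ _ _ (hz isT)).
  by apply: hp; rewrite h1 h2.
- apply: derivable_within_continuous => z; rewrite in_itv /= => /andP[h1 h2].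
  by have [] := hd z; rewrite ?h1 ?h2.
- by rewrite in_itv /= ux (le_trans (ltW xy) yv).
- by rewrite in_itv /= yv (le_trans ux (ltW xy)).
- exact: xy.
Qed.

Lemma decr_lem (f f' : R -> R) (u v : R) :
  (forall x, u <= x <= v -> is_derive x 1 f (f' x)) ->
  (forall x, u < x < v -> f' x < 0) ->
  forall x y, u <= x -> x < y -> y <= v -> f y < f x.
Proof.
move=> hd hn x y ux xy yv.
suff : - f x < - f y by rewrite ltrN2.
apply: (@incr_lem (fun z => - f z) (fun z => - f' z) u v) => //.
  move=> z hz; have := hd z hz => H.
  have H2 := is_deriveN H.
  by apply: H2.
by move=> z hz; rewrite oppr_gt0; apply: hn.
Qed.

Lemma ivt_lem (f : R -> R) (u v c : R) : u <= v ->
  (forall x, u <= x <= v -> derivable f x 1) ->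
  (f u <= c <= f v) \/ (f v <= c <= f u) ->
  exists2 x, u <= x <= v & f x = c.
Proof.
move=> uv hd hc.
have [x xi fx] : exists2 x, x \in `[u, v] & f x = c.
  apply: IVT => //.
    apply: derivable_within_continuous => z; rewrite in_itv /= => hz.
    exact: hd.
  case: hc => /andP[h1 h2]; apply/andP; split;
    by rewrite ?ge_min ?le_max ?h1 ?h2 ?orbT.
by exists x => //; move: xi; rewrite in_itv.
Qed.

End Gen.

Section Main.
Variables (R : realType) (a b d : R).
Hypotheses (ha : 0 < a) (hb : 0 < b) (hd : 0 < d).
Local Ltac hyps := have ha' := ha; have hb' := hb; have hd' := hd.

Definition Fp : {poly R} := 'X^3 - a%:P * 'X^2 - b%:P * 'X.
Definition F (t : R) := Fp.[t] - d / t.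
Definition gp : {poly R} := 3%:P * 'X^4 - (2 * a)%:P * 'X^3 - b%:P * 'X^2 + d%:P.
Definition g (t : R) := gp.[t].
Definition kf (t : R) := 4 * t ^+ 3 - 3 * a * t ^+ 2 - 2 * b * t.
Definition q (t : R) := 6 * t ^+ 2 - 3 * a * t - b.

Lemma gE (t : R) : g t = 3 * t ^+ 4 - 2 * a * t ^+ 3 - b * t ^+ 2 + d.
Proof. by rewrite /g /gp !hornerE. Qed.

Lemma gdE (t : R) : (deriv gp).[t] = 2 * t * q t.
Proof. rewrite /gp /q !poly.derivE !hornerE /=. ring. Qed.

Lemma FE (t : R) : F t = t ^+ 3 - a * t ^+ 2 - b * t - d / t.
Proof. by rewrite /F /Fp !hornerE. Qed.

Lemma Fder (t : R) : 0 < t -> is_derive t 1 F (g t / t ^+ 2).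
Proof.
move=> t0; have t0' : t != 0 by rewrite gt_eqF.
have H1 := is_derive_poly Fp t.
have H2 := is_deriveZ d (@is_derive_inv R t t0').
have H3 := is_deriveB H1 H2.
have -> : F = (horner Fp - d \*: (fun y => y^-1)).
  by apply/funext => y /=.
apply: is_derive_eq.
rewrite scalerN opprK gE /Fp !poly.derivE !hornerE.
have -> : d *: t ^- 2 = d * t ^- 2 by [].
rewrite /=. by field.
Qed.

Lemma gder (t : R) : is_derive t 1 g (2 * t * q t).
Proof. rewrite -gdE; exact: is_derive_poly. Qed.

Lemma kfF (t : R) : t != 0 -> kf t - F t = g t / t.
Proof. move=> t0; rewrite FE gE /kf; by field. Qed.

Lemma xF (t : R) : t != 0 -> t * F t = t ^+ 4 - a * t ^+ 3 - b * t ^+ 2 - d.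
Proof. move=> t0; rewrite FE; by field. Qed.

Lemma F_der_ex (x : R) : 0 < x -> derivable F x 1.
Proof. by move=> x0; have [] := @Fder x x0. Qed.

Lemma F_incr_gen (u v : R) : 0 < u -> (forall x, u < x < v -> 0 < g x) ->
  forall x y, u <= x -> x < y -> y <= v -> F x < F y.
Proof.
move=> u0 hg.
apply: (@incr_lem R F (fun t => g t / t ^+ 2) u v).
  by move=> x /andP[h1 _]; apply: (@Fder x); exact: (lt_le_trans u0 h1).
move=> x hx; have /andP[h1 _] := hx.
by rewrite divr_gt0 ?hg // exprn_gt0 // (lt_trans u0 h1).
Qed.

Lemma F_decr_gen (u v : R) : 0 < u -> (forall x, u < x < v -> g x < 0) ->
  forall x y, u <= x -> x < y -> y <= v -> F y < F x.
Proof.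
move=> u0 hg.
apply: (@decr_lem R F (fun t => g t / t ^+ 2) u v).
  by move=> x /andP[h1 _]; apply: (@Fder x); exact: (lt_le_trans u0 h1).
move=> x hx; have /andP[h1 _] := hx.
by rewrite pmulr_llt0 ?hg // invr_gt0 exprn_gt0 // (lt_trans u0 h1).
Qed.

Lemma F_small (c w : R) : 0 < w -> exists2 x, (0 < x) && (x <= w) & F x < c.
Proof.
move=> w0.
set e := d / (`|c| + 1).
have e0 : 0 < e by rewrite divr_gt0 // ltr_wpDl.
set x := Num.min (Num.min w 1) e.
have x0 : 0 < x by rewrite !lt_min w0 e0 ltr01.
have x1 : x <= 1 by rewrite /x !ge_min lexx orbT.
have xe : x <= e by rewrite /x ge_min lexx orbT.
exists x; first by rewrite x0 /x !ge_min lexx.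
have xc : x * (`|c| + 1) <= d.
  by rewrite -ler_pdivlMr ?ltr_wpDl.
have hc : - `|c| <= c by rewrite lerNl -normrN ler_norm.
have hx : x * F x < x * c.
  rewrite xF ?gt_eqF //.
  have h4 : x ^+ 4 <= x.
    by rewrite -[leRHS]expr1 ler_wiXn2l // ltW.
  have h5 : 0 < a * x ^+ 3 by rewrite mulr_gt0 // exprn_gt0.
  have h6 : 0 < b * x ^+ 2 by rewrite mulr_gt0 // exprn_gt0.
  have h7 : x * - `|c| <= x * c by rewrite ler_pM2l.
  have ha' := ha.
  lra.
by rewrite ltr_pM2l in hx.
Qed.

Lemma F_large (c w : R) : exists2 x, (0 < x) && (w <= x) & c < F x.
Proof.
set x := Num.max (Num.max w 1) (a + b + d + `|c| + 1).
have x1 : 1 <= x by rewrite /x !le_max lexx orbT.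
have x0 : 0 < x by apply: lt_le_trans x1.
have xw : w <= x by rewrite /x !le_max lexx.
have xb : a + b + d + `|c| + 1 <= x by rewrite /x le_max lexx orbT.
exists x; first by rewrite x0 xw.
have hc : c <= `|c| := ler_norm c.
have hx : x * c < x * F x.
  rewrite xF ?gt_eqF //.
  have h1 : 0 <= x - 1 by rewrite subr_ge0.
  have h2 : b * x ^+ 2 <= b * x ^+ 3.
    by rewrite ler_pM2l // (ler_weXn2l x1).
  have h3 : d <= d * x ^+ 3.
    by rewrite ler_peMr ?exprn_ege1 // ltW.
  have h4 : x * (`|c| + 1) <= x ^+ 3 * (`|c| + 1).
    rewrite ler_pM2r ?ltr_wpDl //.
    by rewrite ler_eXnr.
  have h5 : x ^+ 3 * (`|c| + 1) <= x ^+ 3 * (x - a - b - d).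
    rewrite ler_pM2l ?exprn_gt0 //.
    have hb' := hb; have hd' := hd; lra.
  have e1 : x ^+ 4 = x * x ^+ 3 by rewrite exprS.
  have hcx : x * c <= x * `|c| by rewrite ler_pM2l.
  have hd' := hd; have hb' := hb.
  have e2 : x ^+ 3 * (x - a - b - d) = x ^+ 4 - a * x ^+ 3 - b * x ^+ 3 - d * x ^+ 3.
    by rewrite e1; ring.
  lra.
by rewrite ltr_pM2l in hx.
Qed.

Lemma eqF (c t : R) : equilibrium a b c d t <-> 0 < t /\ F t = c.
Proof.
have key : t != 0 -> phi a b c d t - t = (c - F t) / t ^+ 2.
  by move=> t0; rewrite /phi FE; field.
split => -[t0 e]; split => //.
  have := key (negbT (gt_eqF t0)); rewrite e subrr => /esym /eqP.
  rewrite mulf_eq0 invr_eq0 expf_eq0 (gt_eqF t0) /= orbF subr_eq0 => /eqP.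
  by [].
apply/eqP; rewrite -subr_eq0 key; last by rewrite gt_eqF.
by rewrite e subrr mul0r.
Qed.

Lemma PE (c t : R) : t != 0 -> (Ppoly a b c d).[t] = t * (F t - c).
Proof. by move=> t0; rewrite mulrBr xF // /Ppoly !hornerE /=; ring. Qed.

Lemma P1E (c t : R) : (deriv (Ppoly a b c d)).[t] = kf t - c.
Proof. by rewrite /Ppoly /kf !poly.derivE !hornerE /=; ring. Qed.

Lemma P2E (c t : R) : (derivn 2 (Ppoly a b c d)).[t] = 2 * q t.
Proof. by rewrite /Ppoly /q !derivnS !derivn0 !poly.derivE !hornerE /=; ring. Qed.

Lemma touchE (c t : R) : 0 < t -> touches (Ppoly a b c d) t -> g t = 0 /\ c = kf t.
Proof.
move=> t0 [h1 h2].
have t0' : t != 0 by rewrite gt_eqF.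
move: h1; rewrite PE // => /eqP; rewrite mulf_eq0 (negbTE t0') /= subr_eq0 => /eqP e1.
move: h2; rewrite P1E => /eqP; rewrite subr_eq0 => /eqP e2.
split => //.
have := @kfF t t0'; rewrite e1 e2 subrr => /esym /eqP.
by rewrite mulf_eq0 invr_eq0 (negbTE t0') orbF => /eqP.
Qed.

Lemma neq_seq (c : R) (l : seq R) : uniq l ->
  (forall t, t \in l <-> (0 < t /\ F t = c)) -> n_equilibria a b c d (size l).
Proof.
move=> ul hl; exists l; split => // t; split.
  by move=> /hl /eqF.
by move=> /eqF /hl.
Qed.

Lemma tangent (t c : R) : 0 < t -> g t = 0 -> c = kf t -> tangent_to_diag (phi a b c d) t.
Proof.
move=> t0 gt0 ->.
have t0' : t != 0 by rewrite gt_eqF.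
have FtE : F t = kf t.
  by apply/eqP; rewrite eq_sym -subr_eq0 kfF // gt0 mul0r.
split.
  by have [] := (eqF (kf t) t).2 (conj t0 FtE).
set pp : {poly R} := a%:P * 'X^3 + b%:P * 'X^2 + (kf t)%:P * 'X + d%:P.
have -> : phi a b (kf t) d = (horner pp * ((fun y : R => y^-1) ^+ 3)).
  apply/funext => y; rewrite mulrfctE exprfctE /phi /pp !hornerE /=.
  have [->|y0] := eqVneq y 0; first by rewrite !invr0 !mulr0 expr0n /= invr0 mulr0.
  by field.
have H1 := is_derive_poly pp t.
have H2 := is_deriveX 3 (@is_derive_inv R t t0').
have H3 := is_deriveM H1 H2.
apply: is_derive_eq.
have dE : d = - 3 * t ^+ 4 + 2 * a * t ^+ 3 + b * t ^+ 2.
  by move: gt0; rewrite gE => e; rewrite -[LHS]subr0 -e; ring.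
rewrite /pp !poly.derivE !hornerE /= /kf.
have -> : forall u v : R, u *: v = u * v by [].
rewrite exprfctE /=.
rewrite /GRing.scale /=.
rewrite dE; by field.
Qed.

Variable cb : R.
Hypotheses (hH : Hf a b cb = 0) (hcb : cb < 0).
Local Ltac hyps2 := hyps; have hcb' := hcb.
Definition D := 3 * a ^+ 2 + 8 * b.
Definition s := - (6 * cb + a * b) / D.

Lemma Dpos : 0 < D.
Proof. rewrite /D; have h : 0 <= a ^+ 2 by exact: sqr_ge0. hyps; lra. Qed.

Lemma sD : s * D = - (6 * cb + a * b).
Proof. have := Dpos; rewrite /s => h; field; by rewrite gt_eqF. Qed.

Lemma qs0 : q s = 0.
Proof.
have h : q s * D ^+ 2 = 2 * Hf a b cb.
  have -> : q s * D ^+ 2 = 6 * (s * D) ^+ 2 - 3 * a * (s * D) * D - b * D ^+ 2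
    by rewrite /q; ring.
  by rewrite sD /Hf /D; ring.
move: h; rewrite hH mulr0 => /eqP; rewrite mulf_eq0 => /orP[/eqP //|].
by rewrite expf_eq0 /= gt_eqF // Dpos.
Qed.

Lemma cbE : kf s = cb.
Proof.
have -> : kf s = (2 * s / 3 - a / 6) * q s - (s * D + a * b) / 6
  by rewrite /kf /q /D; field.
by rewrite qs0 sD; field.
Qed.

Lemma s_pos : 0 < s.
Proof.
have h1 : 0 < s * D + a * b.
  have := cbE; have -> : kf s = (2 * s / 3 - a / 6) * q s - (s * D + a * b) / 6
    by rewrite /kf /q /D; field.
  rewrite qs0 mulr0 sub0r => e; move: hcb; rewrite -e; hyps2; lra.
have h2 : 6 * (s * D) ^+ 2 = 3 * a * (s * D) * D + b * D ^+ 2.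
  have := qs0; rewrite /q => e.
  have -> : 6 * (s * D) ^+ 2 = (6 * s ^+ 2) * D ^+ 2 by ring.
  have -> : 6 * s ^+ 2 = 3 * a * s + b by hyps2; lra.
  ring.
have hD := Dpos.
rewrite ltNge; apply/negP => hs.
have hw : s * D <= 0 by rewrite mulr_le0_ge0 // ltW.
set w := s * D in h1 h2 hw.
have hab : 0 < a * b by rewrite mulr_gt0.
have e1 : w ^+ 2 < (a * b) ^+ 2 by hyps2; nra.
have e3 : 0 < (w + a * b) * (a * D) by rewrite mulr_gt0 // mulr_gt0.
have e2 : b * D ^+ 2 = 3 * a ^+ 2 * b * D + 8 * b ^+ 2 * D by rewrite /D; ring.
have e4 : 8 * b ^+ 2 * D = 24 * (a * b) ^+ 2 + 64 * b ^+ 3 by rewrite /D; ring.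
have e5 : 0 < b ^+ 3 by rewrite exprn_gt0.
have e6 : 0 < (a * b) ^+ 2 by rewrite exprn_gt0.
have e7 : (w + a * b) * (a * D) = a * w * D + a ^+ 2 * b * D by ring.
clear -e1 e2 e3 e4 e5 e6 e7 h2. nra.
Qed.

Lemma qE (t : R) : q t = (t - s) * (6 * (t + s) - 3 * a).
Proof. have -> : q t = q t - q s by rewrite qs0 subr0. rewrite /q; ring. Qed.

Lemma s_a : 0 < 6 * s - 3 * a.
Proof.
have := qs0; rewrite /q => e; have hs := s_pos.
have : s * (6 * s - 3 * a) = b by hyps2; lra.
move=> e2; rewrite -(pmulr_rgt0 _ hs) e2 //.
Qed.

Lemma q_neg (t : R) : 0 <= t -> t < s -> q t < 0.
Proof. move=> h1 h2; rewrite qE; have := s_a; hyps2; nra. Qed.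

Lemma q_pos (t : R) : s < t -> 0 < q t.
Proof. move=> h2; rewrite qE; have := s_a; hyps2; nra. Qed.

Lemma gs : 12 * (g s - d) + b ^+ 2 - 3 * a * cb = 0.
Proof.
rewrite -cbE gE.
have -> : 12 * (3 * s ^+ 4 - 2 * a * s ^+ 3 - b * s ^+ 2 + d - d) + b ^+ 2 - 3 * a * kf s
  = q s ^+ 2 by rewrite /q /kf; ring.
by rewrite qs0 expr0n.
Qed.

Lemma g_dec (x y : R) : 0 <= x -> x < y -> y <= s -> g y < g x.
Proof.
move=> h1 h2 h3.
apply: (@decr_lem R g (fun t => 2 * t * q t) 0 s) => //.
  by move=> z _; exact: gder.
move=> z /andP[z0 zs]; have := @q_neg z (ltW z0) zs; hyps2; nra.
Qed.

Lemma g_inc (x y : R) : s <= x -> x < y -> g x < g y.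
Proof.
move=> h1 h2.
apply: (@incr_lem R g (fun t => 2 * t * q t) s y) => //.
  by move=> z _; exact: gder.
move=> z /andP[z0 zs]; have := @q_pos z z0; have := s_pos; hyps2; nra.
Qed.

Lemma F_inc_all (x y : R) : 0 <= g s -> 0 < x -> x < y -> F x < F y.
Proof.
move=> gs0 x0 xy.
have hs := s_pos.
have inc1 : forall u v, 0 < u -> u < v -> v <= s -> F u < F v.
  move=> u v u0 uv vs.
  apply: (@F_incr_gen u s u0) => // z /andP[z1 z2].
  by apply: le_lt_trans gs0 _; apply: g_dec => //; apply: ltW (lt_trans u0 z1).
have inc2 : forall u v, s <= u -> u < v -> F u < F v.
  move=> u v su uv.
  apply: (@F_incr_gen u v (lt_le_trans hs su)) => // z /andP[z1 z2].
  by apply: le_lt_trans gs0 _; apply: g_inc => //; apply: le_lt_trans su z1.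
have [ys|sy] := leP y s; first exact: inc1.
have [xs|sx] := leP s x; first exact: inc2.
by apply: (@lt_trans _ _ (F s)); [apply: inc1 | apply: inc2].
Qed.

Lemma caseB (c : R) : 0 <= g s -> n_equilibria a b c d 1.
Proof.
move=> gs0.
have [x0 /andP[x00 _] Fx0] := @F_small c 1 ltr01.
have [X /andP[X0 xX] FX] := @F_large c x0.
have [r /andP[r1 r2] Fr] : exists2 r, x0 <= r <= X & F r = c.
  apply: ivt_lem => //.
    by move=> z /andP[z1 _]; apply: F_der_ex; apply: lt_le_trans z1.
  by left; rewrite (ltW Fx0) (ltW FX).
have r0 : 0 < r := lt_le_trans x00 r1.
have -> : 1%N = size [:: r] by [].
apply: neq_seq => // t; rewrite inE; split.
  by move=> /eqP ->.
move=> [t0 Ft]; apply/eqP.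
have [tr|rt|//] := ltgtP t r.
  by have := @F_inc_all t r gs0 t0 tr; rewrite Ft Fr ltxx.
by have := @F_inc_all r t gs0 r0 rt; rewrite Ft Fr ltxx.
Qed.

Lemma exists_tM : g s < 0 -> exists tM, [/\ 0 < tM, tM < s & g tM = 0].
Proof.
move=> gs0; have hs := s_pos.
have g0 : g 0 = d by rewrite gE; rewrite !expr0n /=; ring.
have [x /andP[x1 x2] gx] : exists2 x, 0 <= x <= s & g x = 0.
  apply: ivt_lem; first exact: ltW.
    by move=> z _; have [] := gder z.
  by right; rewrite (ltW gs0) g0 ltW.
exists x; split => //.
  by rewrite lt_neqAle x1 andbT; apply/eqP => ex; move: gx; rewrite -ex g0 => e; move: hd; rewrite e ltxx.
by rewrite lt_neqAle x2 andbT; apply/eqP => ex; move: gx; rewrite ex => e; move: gs0; rewrite e ltxx.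
Qed.

Lemma exists_tm : g s < 0 -> exists tm, s < tm /\ g tm = 0.
Proof.
move=> gs0; have hs := s_pos.
set T := s + a + b + 1.
have T1 : 1 < T by rewrite /T; have := hb; have := ha; lra.
have sT : s <= T by rewrite /T; have := hb; have := ha; lra.
have gT : 0 < g T.
  rewrite gE.
  have e : 3 * T ^+ 4 - 2 * a * T ^+ 3 - b * T ^+ 2 + d =
    T ^+ 2 * (T * (3 * T - 2 * a - b)) + b * T ^+ 2 * (T - 1) + d by ring.
  rewrite e.
  have h1 : 0 < 3 * T - 2 * a - b by rewrite /T; have := hb; have := ha; have := hs; lra.
  have T0 : 0 < T by apply: lt_trans T1.
  have h2 : 0 < T ^+ 2 * (T * (3 * T - 2 * a - b)) by rewrite !mulr_gt0 // exprn_gt0.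
  have h3 : 0 <= b * T ^+ 2 * (T - 1) by rewrite !mulr_ge0 ?subr_ge0 ?ltW // exprn_ge0 // ltW.
  have := hd; lra.
have [x /andP[x1 x2] gx] : exists2 x, s <= x <= T & g x = 0.
  apply: ivt_lem => //.
  by left; rewrite (ltW gs0) ltW.
exists x; split => //.
by rewrite lt_neqAle x1 andbT; apply/eqP => ex; move: gx; rewrite -ex => e; move: gs0; rewrite e ltxx.
Qed.

Variable cminus : R.
Hypotheses (hQ : Qf a b d cminus = 0) (hcmn : cminus < 0).

Section Two.
Variables tM tm : R.
Hypotheses (tM0 : 0 < tM) (tMs : tM < s) (gtM : g tM = 0) (stm : s < tm) (gtm : g tm = 0).

Lemma tMm : tM < tm. Proof. exact: lt_trans tMs stm. Qed.
Lemma tm0 : 0 < tm. Proof. exact: lt_trans tM0 tMm. Qed.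

Lemma gpos1 (t : R) : 0 <= t -> t < tM -> 0 < g t.
Proof. move=> h1 h2; rewrite -gtM; apply: g_dec => //; exact: ltW. Qed.

Lemma gneg (t : R) : tM < t -> t < tm -> g t < 0.
Proof.
move=> h1 h2; have [ts|st] := leP t s.
  by rewrite -gtM; apply: g_dec => //; exact: ltW.
by rewrite -gtm; apply: g_inc => //; exact: ltW.
Qed.

Lemma gpos2 (t : R) : tm < t -> 0 < g t.
Proof. by move=> h; rewrite -gtm; apply: g_inc => //; exact: ltW. Qed.

Lemma gzero (t : R) : 0 < t -> g t = 0 -> t = tM \/ t = tm.
Proof.
move=> t0 gt0.
have [h1|h1|->] := ltgtP t tM; last by left.
  by have := @gpos1 t (ltW t0) h1; rewrite gt0 ltxx.
have [h2|h2|->] := ltgtP t tm; last by right.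
  by have := @gneg t h1 h2; rewrite gt0 ltxx.
by have := @gpos2 t h2; rewrite gt0 ltxx.
Qed.

Lemma Finc1 (x y : R) : 0 < x -> x < y -> y <= tM -> F x < F y.
Proof.
move=> x0 xy ytM; apply: (@F_incr_gen x tM x0) => // z /andP[z1 z2].
by apply: gpos1 => //; apply: ltW (lt_trans x0 z1).
Qed.

Lemma Fdec (x y : R) : tM <= x -> x < y -> y <= tm -> F y < F x.
Proof.
move=> hx xy ytm; apply: (@F_decr_gen x tm (lt_le_trans tM0 hx)) => // z /andP[z1 z2].
by apply: gneg => //; apply: le_lt_trans hx z1.
Qed.

Lemma Finc2 (x y : R) : tm <= x -> x < y -> F x < F y.
Proof.
move=> hx xy; apply: (@F_incr_gen x y (lt_le_trans tm0 hx)) => // z /andP[z1 _].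
by apply: gpos2; apply: le_lt_trans hx z1.
Qed.

Definition cm := F tm.
Definition cM := F tM.

Lemma Flt_cM (t : R) : 0 < t -> t < tM -> F t < cM.
Proof. by move=> h1 h2; apply: Finc1. Qed.

Lemma Fle_cM (t : R) : 0 < t -> t <= tm -> F t <= cM.
Proof.
move=> h1 h2; have [h|h|->] := ltgtP t tM; last by [].
  by apply: ltW; apply: Flt_cM.
by apply: ltW; apply: Fdec.
Qed.

Lemma Fgt_cm (t : R) : tm < t -> cm < F t.
Proof. by move=> h; apply: Finc2. Qed.

Lemma Fge_cm (t : R) : tM <= t -> cm <= F t.
Proof.
move=> h; have [h1|h1|->] := ltgtP t tm; last by [].
  by apply: ltW; apply: Fdec.
by apply: ltW; apply: Fgt_cm.
Qed.

Lemma cm_lt_cM : cm < cM.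
Proof. by apply: Fdec => //; exact: tMm. Qed.

Lemma root_in (c u v : R) : 0 < u -> u <= v -> (F u <= c <= F v) \/ (F v <= c <= F u) ->
  exists2 r, u <= r <= v & F r = c.
Proof.
move=> u0 uv h; apply: ivt_lem => //.
by move=> z /andP[z1 _]; apply: F_der_ex; apply: lt_le_trans z1.
Qed.

Lemma inj1 (x y : R) : 0 < x -> 0 < y -> x <= tM -> y <= tM -> F x = F y -> x = y.
Proof.
move=> x0 y0 h1 h2 e; have [xy|yx|//] := ltgtP x y.
  by have := @Finc1 x y x0 xy h2; rewrite e ltxx.
by have := @Finc1 y x y0 yx h1; rewrite e ltxx.
Qed.

Lemma inj2 (x y : R) : tM <= x -> tM <= y -> x <= tm -> y <= tm -> F x = F y -> x = y.
Proof.
move=> h1 h2 h3 h4 e; have [xy|yx|//] := ltgtP x y.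
  by have := @Fdec x y h1 xy h4; rewrite e ltxx.
by have := @Fdec y x h2 yx h3; rewrite e ltxx.
Qed.

Lemma inj3 (x y : R) : tm <= x -> tm <= y -> F x = F y -> x = y.
Proof.
move=> h1 h2 e; have [xy|yx|//] := ltgtP x y.
  by have := @Finc2 x y h1 xy; rewrite e ltxx.
by have := @Finc2 y x h2 yx; rewrite e ltxx.
Qed.

Lemma root1 (c : R) : c < cM -> exists r, [/\ 0 < r, r < tM & F r = c].
Proof.
move=> hc.
have [x0 /andP[x00 x0M] Fx0] := @F_small c tM tM0.
have [r /andP[r1 r2] Fr] : exists2 r, x0 <= r <= tM & F r = c.
  by apply: root_in => //; left; rewrite (ltW Fx0) (ltW hc).
exists r; split => //; first exact: lt_le_trans r1.
by rewrite lt_neqAle r2 andbT; apply/eqP => e; move: Fr hc; rewrite e /cM => ->; rewrite ltxx.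
Qed.
Lemma root3 (c : R) : cm < c -> exists r, tm < r /\ F r = c.
Proof.
move=> hc.
have [X /andP[X0 XM] FX] := @F_large c tm.
have [r /andP[r1 r2] Fr] : exists2 r, tm <= r <= X & F r = c.
  by apply: root_in => //; [exact: tm0 | left; rewrite (ltW FX) (ltW hc)].
exists r; split => //.
by rewrite lt_neqAle r1 andbT; apply/eqP => e; move: Fr hc; rewrite -e /cm => ->; rewrite ltxx.
Qed.

Lemma root2 (c : R) : cm < c -> c < cM -> exists r, [/\ tM < r, r < tm & F r = c].
Proof.
move=> h1 h2.
have [r /andP[r1 r2] Fr] : exists2 r, tM <= r <= tm & F r = c.
  by apply: root_in => //; [exact: ltW tMm | right; rewrite (ltW h1) (ltW h2)].
exists r; split => //.
  by rewrite lt_neqAle r1 andbT; apply/eqP => e; move: Fr h2; rewrite -e /cM => ->; rewrite ltxx.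
by rewrite lt_neqAle r2 andbT; apply/eqP => e; move: Fr h1; rewrite e /cm => ->; rewrite ltxx.
Qed.

Lemma N1a (c : R) : c < cm -> n_equilibria a b c d 1.
Proof.
move=> hc; have [r [r0 rM Fr]] := @root1 c (lt_trans hc cm_lt_cM).
have -> : 1%N = size [:: r] by [].
apply: neq_seq => // t; rewrite inE; split; first by move=> /eqP ->.
move=> [t0 Ft]; apply/eqP.
have [h|h] := leP t tM.
  by apply: inj1 => //; [exact: ltW | rewrite Ft Fr].
by have := @Fge_cm t (ltW h); rewrite Ft => h'; move: (lt_le_trans hc h'); rewrite ltxx.
Qed.

Lemma N1b (c : R) : cM < c -> n_equilibria a b c d 1.
Proof.
move=> hc; have [r [r0 Fr]] := @root3 c (lt_trans cm_lt_cM hc).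
have -> : 1%N = size [:: r] by [].
apply: neq_seq => // t; rewrite inE; split.
  by move=> /eqP ->; split => //; apply: lt_trans tm0 r0.
move=> [t0 Ft]; apply/eqP.
have [h|h] := leP t tm.
  by have := @Fle_cM t t0 h; rewrite Ft => h'; move: (lt_le_trans hc h'); rewrite ltxx.
by apply: inj3; [exact: ltW | exact: ltW | rewrite Ft Fr].
Qed.

Lemma N2 (c : R) : cm < c -> c < cM -> n_equilibria a b c d 3.
Proof.
move=> h1 h2.
have [r1 [r10 r1M Fr1]] := @root1 c h2.
have [r2 [r2a r2b Fr2]] := @root2 c h1 h2.
have [r3 [r3a Fr3]] := @root3 c h1.
have -> : 3%N = size [:: r1; r2; r3] by [].
apply: neq_seq.
  rewrite /= !inE !negb_or andbT.
  rewrite (lt_eqF (lt_trans r1M r2a)) (lt_eqF (lt_trans r1M (lt_trans tMm r3a))).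
  by rewrite (lt_eqF (lt_trans r2b r3a)).
move=> t; rewrite !inE; split.
  move=> /orP[/eqP->|/orP[/eqP->|/eqP->]]; split => //.
  - exact: lt_trans tM0 r2a.
  - exact: lt_trans tm0 r3a.
move=> [t0 Ft].
have [h|h] := leP t tM.
  by apply/orP; left; apply/eqP; apply: inj1 => //; [exact: ltW | rewrite Ft Fr1].
have [h'|h'] := leP t tm.
  apply/orP; right; apply/orP; left; apply/eqP.
  apply: inj2; [exact: ltW | exact: ltW | exact: h' | exact: ltW | by rewrite Ft Fr2].
apply/orP; right; apply/orP; right; apply/eqP.
by apply: inj3; [exact: ltW | exact: ltW | rewrite Ft Fr3].
Qed.

Lemma N3 : n_equilibria a b cm d 2 /\ (forall t, 0 < t -> F t = cm -> t <= tm).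
Proof.
have Hall : forall t, 0 < t -> F t = cm -> t <= tm.
  move=> t t0 Ft; rewrite leNgt; apply/negP => h.
  by have := @Fgt_cm t h; rewrite Ft ltxx.
split => //.
have [r1 [r10 r1M Fr1]] := @root1 cm cm_lt_cM.
have -> : 2%N = size [:: r1; tm] by [].
apply: neq_seq.
  by rewrite /= !inE andbT (lt_eqF (lt_trans r1M tMm)).
move=> t; rewrite !inE; split.
  by move=> /orP[/eqP->|/eqP->]; split => //; exact: tm0.
move=> [t0 Ft].
have [h|h] := leP t tM.
  by apply/orP; left; apply/eqP; apply: inj1 => //; [exact: ltW | rewrite Ft Fr1].
apply/orP; right; apply/eqP; apply: inj2 => //; first exact: ltW.
- exact: ltW tMm.
- exact: Hall.
Qed.

Lemma N4 : n_equilibria a b cM d 2 /\ (forall t, 0 < t -> F t = cM -> tM <= t).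
Proof.
have Hall : forall t, 0 < t -> F t = cM -> tM <= t.
  move=> t t0 Ft; rewrite leNgt; apply/negP => h.
  by have := @Flt_cM t t0 h; rewrite Ft ltxx.
split => //.
have [r3 [r3a Fr3]] := @root3 cM cm_lt_cM.
have -> : 2%N = size [:: tM; r3] by [].
apply: neq_seq.
  by rewrite /= !inE andbT (lt_eqF (lt_trans tMm r3a)).
move=> t; rewrite !inE; split.
  by move=> /orP[/eqP->|/eqP->]; split => //; exact: lt_trans tm0 r3a.
move=> [t0 Ft].
have [h|h] := leP t tm.
  by apply/orP; left; apply/eqP; apply: inj2 => //; [exact: Hall | exact: ltW tMm].
by apply/orP; right; apply/eqP; apply: inj3; [exact: ltW | exact: ltW | rewrite Ft Fr3].
Qed.
Lemma QfE (x : R) : Qf a b d x = 4 * a * x ^+ 3 - b ^+ 2 * x ^+ 2 - 18 * a * b * d * x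
  + 27 * a ^+ 2 * d ^+ 2 + 4 * d * b ^+ 3.
Proof. by []. Qed.

Lemma dE (t : R) : g t = 0 -> d = - 3 * t ^+ 4 + 2 * a * t ^+ 3 + b * t ^+ 2.
Proof. by rewrite gE => e; rewrite -[LHS]subr0 -e; ring. Qed.

Lemma FkE (t : R) : 0 < t -> g t = 0 -> F t = kf t.
Proof.
move=> t0 gt0; have t0' : t != 0 by rewrite gt_eqF.
by apply/eqP; rewrite eq_sym -subr_eq0 kfF // gt0 mul0r.
Qed.

Lemma cb_lt_cm : cb < cm.
Proof.
rewrite /cm (@FkE tm tm0 gtm) -cbE.
have e : kf tm - kf s = (tm - s) ^+ 2 * (4 * tm + 8 * s - 3 * a) + 2 * (tm - s) * q s
  by rewrite /kf /q; ring.
rewrite qs0 mulr0 addr0 in e.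
have h1 : 0 < (tm - s) ^+ 2 by rewrite exprn_gt0 // subr_gt0.
have h2 : 0 < 4 * tm + 8 * s - 3 * a.
  have := s_a; have := s_pos; have := tm0; lra.
have := mulr_gt0 h1 h2; rewrite -e subr_gt0 => h.
have e1 : (tm - s) ^+ 2 * (4 * tm + 8 * s - 3 * a) = kf tm - kf s by rewrite e.
lra.
Qed.

Lemma cM_lt_cstar : cM < cstar b d.
Proof.
rewrite /cM (@FkE tM tM0 gtM) /cstar.
set t := tM.
have qt : q t < 0 by apply: q_neg => //; exact: ltW.
have h1 : 0 < 2 * b + 3 * a * t - 4 * t ^+ 2.
  have hat : 0 < a * t by rewrite mulr_gt0. move: qt; rewrite /q => qt; have := hb; lra.
have hneg : 0 < - kf t.
  have -> : - kf t = t * (2 * b + 3 * a * t - 4 * t ^+ 2) by rewrite /kf; ring.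
  by rewrite mulr_gt0.
have hsq : 3 * b * d < (- kf t) ^+ 2.
  rewrite (@dE tM gtM) -subr_gt0.
  have -> : (- kf t) ^+ 2 - 3 * b * (- 3 * t ^+ 4 + 2 * a * t ^+ 3 + b * t ^+ 2)
     = t ^+ 2 * ((b + 3 * a * t - 4 * t ^+ 2) ^+ 2 + b * t ^+ 2) by rewrite /kf; ring.
  rewrite mulr_gt0 ?exprn_gt0 //.
  by rewrite ltr_wpDl ?sqr_ge0 // mulr_gt0 // exprn_gt0.
have : Num.sqrt (3 * b * d) < - kf t.
  have <- : Num.sqrt ((- kf t) ^+ 2) = - kf t by rewrite sqrtr_sqr gtr0_norm.
  by rewrite ltr_sqrt // exprn_gt0.
by rewrite ltrNr.
Qed.

Lemma Qpos : 0 < Qf a b d cM.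
Proof.
rewrite /cM (@FkE tM tM0 gtM).
set t := tM.
have qt : q t < 0 by apply: q_neg => //; exact: ltW.
set u := 3 * a * t + b - 6 * t ^+ 2.
have u0 : 0 < u by move: qt; rewrite /q /u => qt; lra.
have e : Qf a b d (kf t) = t ^+ 4 * (t ^+ 4 * ((27 * a - 88 * t) ^+ 2 + 32 * t ^+ 2) / 27
           + u * t ^+ 2 * (96 * t ^+ 2 + 32 * u + 24 * b) + 4 * u ^+ 3).
  rewrite QfE (@dE tM gtM) /u /kf /t. by field.
rewrite e; apply: mulr_gt0; first exact: exprn_gt0.
have t0 : 0 < t := tM0.
have p1 : 0 <= t ^+ 4 * ((27 * a - 88 * t) ^+ 2 + 32 * t ^+ 2) / 27.
  apply: divr_ge0 => //; apply: mulr_ge0; first by rewrite exprn_ge0 // ltW.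
  by apply: addr_ge0; [exact: sqr_ge0 | rewrite mulr_ge0 // exprn_ge0 // ltW].
have p2 : 0 <= u * t ^+ 2 * (96 * t ^+ 2 + 32 * u + 24 * b).
  apply: mulr_ge0; first by rewrite mulr_ge0 ?exprn_ge0 // ltW.
  have q1 : 0 <= t ^+ 2 by rewrite exprn_ge0 // ltW.
  have := u0; have := hb; lra.
have p3 : 0 < 4 * u ^+ 3 by rewrite mulr_gt0 // exprn_gt0.
lra.
Qed.

Lemma cminus_lt_cM (y : R) : Qf a b d y = 0 -> y < 0 -> y < cM.
Proof.
move=> Qy y0.
set x := cM.
have x0 : x < 0.
  have := cM_lt_cstar; rewrite /cstar => h; apply: lt_le_trans h _.
  by rewrite oppr_le0 sqrtr_ge0.
set beta := 4 * a * y ^+ 2 - b ^+ 2 * y - 18 * a * b * d.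
have idQ : forall z, Qf a b d z - Qf a b d y = (z - y) * (4 * a * z ^+ 2 + (4 * a * y - b ^+ 2) * z + beta).
  by move=> z; rewrite !QfE /beta; ring.
have Q0 : 0 < Qf a b d 0.
  rewrite QfE.
  have h1 : 0 < 27 * a ^+ 2 * d ^+ 2 by rewrite !mulr_gt0 // exprn_gt0.
  have h2 : 0 < 4 * d * b ^+ 3 by rewrite !mulr_gt0 // exprn_gt0.
  have -> : 4 * a * 0 ^+ 3 - b ^+ 2 * 0 ^+ 2 - 18 * a * b * d * 0 + 27 * a ^+ 2 * d ^+ 2 + 4 * d * b ^+ 3 = 27 * a ^+ 2 * d ^+ 2 + 4 * d * b ^+ 3 by ring.
  exact: addr_gt0.
have hbeta : 0 < beta.
  have := idQ 0; rewrite Qy subr0 => e.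
  have e2 : Qf a b d 0 = - y * beta by rewrite e; ring.
  by move: Q0; rewrite e2 pmulr_rgt0 // oppr_gt0.
have hm : 0 < 4 * a * x ^+ 2 + (4 * a * y - b ^+ 2) * x + beta.
  apply: ltr_wpDl => //; apply: addr_ge0.
    by rewrite mulr_ge0 ?sqr_ge0 // mulr_ge0 // ltW.
  have hn : 4 * a * y - b ^+ 2 < 0.
    rewrite subr_lt0; apply: (@lt_trans _ _ 0); last exact: exprn_gt0.
    by rewrite pmulr_rlt0 // mulr_gt0.
  by apply: ltW; rewrite nmulr_rgt0.
have := idQ x; rewrite Qy subr0 => e.
have := Qpos; rewrite -/x e => h.
by rewrite -subr_gt0; move: h; rewrite pmulr_lgt0.
Qed.

Lemma touch_m : touches (Ppoly a b cm d) tm.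
Proof.
split; first by rewrite PE ?gt_eqF ?tm0 // /cm subrr mulr0.
by rewrite P1E /cm (@FkE tm tm0 gtm) subrr.
Qed.

Lemma touch_M : touches (Ppoly a b cM d) tM.
Proof.
split; first by rewrite PE ?gt_eqF // /cM subrr mulr0.
by rewrite P1E /cM (@FkE tM tM0 gtM) subrr.
Qed.

Lemma locmin : local_min_pt (fun x => (Ppoly a b cm d).[x]) tm.
Proof.
exists (tm - tM); split; first by rewrite subr_gt0 tMm.
move=> x hx.
have h1 : tm - x <= `|x - tm| by rewrite distrC ler_norm.
have xM : tM < x by lra.
have x0 : 0 < x := lt_trans tM0 xM.
rewrite /= PE ?gt_eqF ?tm0 // PE ?gt_eqF // /cm subrr mulr0.
apply: mulr_ge0; first exact: ltW.
by rewrite subr_ge0; exact: (@Fge_cm x (ltW xM)).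
Qed.

Lemma locmax : local_max_pt (fun x => (Ppoly a b cM d).[x]) tM.
Proof.
exists (Num.min tM (tm - tM)); split; first by rewrite lt_min tM0 subr_gt0 tMm.
move=> x; rewrite lt_min => /andP[hx1 hx2].
have h1 : tM - x <= `|x - tM| by rewrite distrC ler_norm.
have h2 : x - tM <= `|x - tM| by rewrite ler_norm.
have x0 : 0 < x by lra.
have xm : x <= tm by have := tMm; lra.
rewrite /= PE ?gt_eqF // PE ?gt_eqF // /cM subrr mulr0.
apply: mulr_ge0_le0; first exact: ltW.
by rewrite subr_le0; exact: (@Fle_cM x x0 xm).
Qed.

Lemma touch_uniq (c t : R) : 0 < t -> touches (Ppoly a b c d) t ->
  (c = cm /\ t = tm) \/ (c = cM /\ t = tM).
Proof.
move=> t0 ht; have [gt0 ->] := @touchE c t t0 ht.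
have [->|->] := @gzero t t0 gt0.
  by right; rewrite /cM (@FkE tM tM0 gtM).
by left; rewrite /cm (@FkE tm tm0 gtm).
Qed.
Lemma partC :
exists cm cM tm tM : R,
       [/\ cb < cm, cm < cM, cM < cstar b d & cminus < cM] /\
       0 < tM /\ tM < tm /\
       (touches (Ppoly a b cm d) tm /\ local_min_pt (fun x => (Ppoly a b cm d).[x]) tm) /\
       (touches (Ppoly a b cM d) tM /\ local_max_pt (fun x => (Ppoly a b cM d).[x]) tM) /\
       (* as c increases from c_b, P touches the axis first at t_m (c = c_m),
          next at t_M (c = c_M), and nowhere else in between *)
       (forall c t : R, cb < c <= cM -> 0 < t -> touches (Ppoly a b c d) t ->
          (c = cm /\ t = tm) \/ (c = cM /\ t = tM)) /\
       (cminus <= cm ->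
          (forall c : R, cm < c < cM -> n_equilibria a b c d 3) /\
          (n_equilibria a b cm d 2 /\ equilibrium a b cm d tm /\
           tangent_to_diag (phi a b cm d) tm /\
           (forall t, equilibrium a b cm d t -> t <= tm)) /\
          (n_equilibria a b cM d 2 /\ equilibrium a b cM d tM /\
           tangent_to_diag (phi a b cM d) tM /\
           (forall t, equilibrium a b cM d t -> tM <= t)) /\
          (forall c : R, (cminus < c < cm) \/ (cM < c < cstar b d) ->
             n_equilibria a b c d 1)) /\
       (cm < cminus ->
          (forall c : R, cminus < c < cM -> n_equilibria a b c d 3) /\
          (n_equilibria a b cM d 2 /\ equilibrium a b cM d tM /\
           tangent_to_diag (phi a b cM d) tM /\
           (forall t, equilibrium a b cM d t -> tM <= t)) /\
          (forall c : R, cM < c < cstar b d -> n_equilibria a b c d 1)).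
Proof.
exists cm, cM, tm, tM.
split; first by split; [exact: cb_lt_cm | exact: cm_lt_cM | exact: cM_lt_cstar | exact: cminus_lt_cM].
split; first exact: tM0.
split; first exact: tMm.
split; first by split; [exact: touch_m | exact: locmin].
split; first by split; [exact: touch_M | exact: locmax].
split; first by move=> c t _ t0 ht; exact: touch_uniq.
have [n3 h3] := N3.
have [n4 h4] := N4.
have eqm : equilibrium a b cm d tm by apply/eqF; split => //; exact: tm0.
have eqM : equilibrium a b cM d tM by apply/eqF; split.
have tgm : tangent_to_diag (phi a b cm d) tm.
  by apply: tangent => //; [exact: tm0 | rewrite /cm (@FkE tm tm0 gtm)].
have tgM : tangent_to_diag (phi a b cM d) tM.
  by apply: tangent => //; rewrite /cM (@FkE tM tM0 gtM).
have Hm : forall t, equilibrium a b cm d t -> t <= tm.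
  by move=> t /eqF [t0 Ft]; exact: h3.
have HM : forall t, equilibrium a b cM d t -> tM <= t.
  by move=> t /eqF [t0 Ft]; exact: h4.
split.
  move=> hle; split; first by move=> c /andP[h1 h2]; exact: N2.
  split; first by [].
  split; first by [].
  by move=> c [/andP[h1 h2]|/andP[h1 h2]]; [exact: N1a | exact: N1b].
move=> hlt; split.
  by move=> c /andP[h1 h2]; apply: N2 => //; exact: lt_trans hlt h1.
split; first by [].
by move=> c /andP[h1 h2]; exact: N1b.
Qed.
End Two.

Lemma main_in :
(forall c : R, cminus < c < cstar b d -> c = cb ->
     let ts := - (6 * cb + a * b) / (3 * a ^+ 2 + 8 * b) in
     [/\ ((Ppoly a b c d)^`()).[ts] = 0,
         ((Ppoly a b c d)^`(2)).[ts] = 0 & 0 < ts]) /\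
  ((b ^+ 2 - 12 * d) / (3 * a) <= cb ->
     forall c : R, cminus < c < cstar b d -> n_equilibria a b c d 1) /\
  (cb < (b ^+ 2 - 12 * d) / (3 * a) ->
     exists cm cM tm tM : R,
       [/\ cb < cm, cm < cM, cM < cstar b d & cminus < cM] /\
       0 < tM /\ tM < tm /\
       (touches (Ppoly a b cm d) tm /\ local_min_pt (fun x => (Ppoly a b cm d).[x]) tm) /\
       (touches (Ppoly a b cM d) tM /\ local_max_pt (fun x => (Ppoly a b cM d).[x]) tM) /\
       (* as c increases from c_b, P touches the axis first at t_m (c = c_m),
          next at t_M (c = c_M), and nowhere else in between *)
       (forall c t : R, cb < c <= cM -> 0 < t -> touches (Ppoly a b c d) t ->
          (c = cm /\ t = tm) \/ (c = cM /\ t = tM)) /\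
       (cminus <= cm ->
          (forall c : R, cm < c < cM -> n_equilibria a b c d 3) /\
          (n_equilibria a b cm d 2 /\ equilibrium a b cm d tm /\
           tangent_to_diag (phi a b cm d) tm /\
           (forall t, equilibrium a b cm d t -> t <= tm)) /\
          (n_equilibria a b cM d 2 /\ equilibrium a b cM d tM /\
           tangent_to_diag (phi a b cM d) tM /\
           (forall t, equilibrium a b cM d t -> tM <= t)) /\
          (forall c : R, (cminus < c < cm) \/ (cM < c < cstar b d) ->
             n_equilibria a b c d 1)) /\
       (cm < cminus ->
          (forall c : R, cminus < c < cM -> n_equilibria a b c d 3) /\
          (n_equilibria a b cM d 2 /\ equilibrium a b cM d tM /\
           tangent_to_diag (phi a b cM d) tM /\
           (forall t, equilibrium a b cM d t -> tM <= t)) /\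
          (forall c : R, cM < c < cstar b d -> n_equilibria a b c d 1))).
Proof.
split.
  move=> c _ -> ts; rewrite /ts.
  have -> : - (6 * cb + a * b) / (3 * a ^+ 2 + 8 * b) = s by [].
  split; [by rewrite P1E cbE subrr | by rewrite P2E qs0 mulr0 | exact: s_pos].
have hgs := gs.
have ha3 : 0 < 3 * a by rewrite mulr_gt0.
split.
  move=> hthr c _; apply: caseB.
  move: hthr; rewrite ler_pdivrMr // => hthr.
  have hcb' := hcb; have hd' := hd; lra.
move=> hthr.
have gneg0 : g s < 0.
  move: hthr; rewrite ltr_pdivlMr // => hthr.
  have hcb' := hcb; have hd' := hd; lra.
have [tM [tM0 tMs gtM]] := exists_tM gneg0.
have [tm [stm gtm]] := exists_tm gneg0.
exact: (@partC tM tm).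
Qed.
End Main.

Theorem theorem2 (R : realType) (a b d cminus cb : R) :
  0 < a -> 0 < b -> 0 < d ->
  Qf a b d cminus = 0 -> cminus < 0 ->
  Hf a b cb = 0 -> cb < 0 ->
(forall c : R, cminus < c < cstar b d -> c = cb ->
     let ts := - (6 * cb + a * b) / (3 * a ^+ 2 + 8 * b) in
     [/\ ((Ppoly a b c d)^`()).[ts] = 0,
         ((Ppoly a b c d)^`(2)).[ts] = 0 & 0 < ts]) /\
  (* (b) *)
  ((b ^+ 2 - 12 * d) / (3 * a) <= cb ->
     forall c : R, cminus < c < cstar b d -> n_equilibria a b c d 1) /\
  (* (c) *)
  (cb < (b ^+ 2 - 12 * d) / (3 * a) ->
     exists cm cM tm tM : R,
       [/\ cb < cm, cm < cM, cM < cstar b d & cminus < cM] /\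
       0 < tM /\ tM < tm /\
       (touches (Ppoly a b cm d) tm /\ local_min_pt (fun x => (Ppoly a b cm d).[x]) tm) /\
       (touches (Ppoly a b cM d) tM /\ local_max_pt (fun x => (Ppoly a b cM d).[x]) tM) /\
       (* as c increases from c_b, P touches the axis first at t_m (c = c_m),
          next at t_M (c = c_M), and nowhere else in between *)
       (forall c t : R, cb < c <= cM -> 0 < t -> touches (Ppoly a b c d) t ->
          (c = cm /\ t = tm) \/ (c = cM /\ t = tM)) /\
       (* (c1) *)
       (cminus <= cm ->
          (forall c : R, cm < c < cM -> n_equilibria a b c d 3) /\
          (n_equilibria a b cm d 2 /\ equilibrium a b cm d tm /\
           tangent_to_diag (phi a b cm d) tm /\
           (forall t, equilibrium a b cm d t -> t <= tm)) /\
          (n_equilibria a b cM d 2 /\ equilibrium a b cM d tM /\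
           tangent_to_diag (phi a b cM d) tM /\
           (forall t, equilibrium a b cM d t -> tM <= t)) /\
          (forall c : R, (cminus < c < cm) \/ (cM < c < cstar b d) ->
             n_equilibria a b c d 1)) /\
       (* (c2) *)
       (cm < cminus ->
          (forall c : R, cminus < c < cM -> n_equilibria a b c d 3) /\
          (n_equilibria a b cM d 2 /\ equilibrium a b cM d tM /\
           tangent_to_diag (phi a b cM d) tM /\
           (forall t, equilibrium a b cM d t -> tM <= t)) /\
          (forall c : R, cM < c < cstar b d -> n_equilibria a b c d 1))).
Proof.
move=> ha hb hd hQ hcm hH hcb.
exact: (@main_in R a b d ha hb hd cb hH hcb cminus hQ hcm).
Qed.
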